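(* Suppose $\nabla f$ is Lipschitz continuous on $\mathbb{R}^n$ with modulus $L$, $f$ is twice continuously differentiable, and let $x^*\in\mathbb{R}^n$ and $\Lambda_*\in\mathbb S^n_{++}$ with $\lambda_MI\succeq\Lambda_*\succeq\lambda_mI$, $\lambda_m>0$, be such that every $M\in\mathcal M^{\Lambda_*}(x^* )$ is nonsingular with $\|M^{-1}\|\le C$ for some $C>0$. Then for all $\beta_c\in(0,1)$ and $\gamma_c\in(0,\beta_c/C)$ there exists $\varepsilon_c>0$, independent of the sample batches, such that for any sample batches $s,t$ and any $x$ satisfying $$x\in B_{\varepsilon_c}(x^* ),\qquad\|\nabla f(x)-G_s(x)\|\le\varepsilon_c,\qquad\|\nabla^2f(x)-H_t(x)\|\le0.5\lambda_m\gamma_c,$$ every $M\in\mathcal M^{\Lambda_*}_{s,t}(x)$ is invertible with $\|M^{-1}\|\le C/(1-\beta_c)$.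
   Context: $r:\mathbb{R}^n\to(-\infty,+\infty]$ convex, lsc, proper; $\mathrm{prox}^\Lambda_r(x):=\arg\min_y r(y)+\frac12\langle x-y,\Lambda(x-y)\rangle$; $\partial$ denotes the Clarke generalized Jacobian. $u^\Lambda(x):=x-\Lambda^{-1}\nabla f(x)$, $\mathcal M^\Lambda(x):=\{(I-D)+D\Lambda^{-1}\nabla^2f(x):D\in\partial\mathrm{prox}^\Lambda_r(u^\Lambda(x))\}$. Sample batches $s,t$ yield a stochastic gradient $G_s(x)\in\mathbb{R}^n$ and a stochastic Hessian $H_t(x)\in\mathbb S^n$; $u^\Lambda_s(x):=x-\Lambda^{-1}G_s(x)$ and $\mathcal M^\Lambda_{s,t}(x):=\{(I-D)+D\Lambda^{-1}H_t(x):D\in\partial\mathrm{prox}^\Lambda_r(u^\Lambda_s(x))\}$. Matrix norms are spectral norms; $B_\varepsilon(x^* )$ is the open Euclidean ball. *)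

(* Defs.v *)
From Stdlib Require Import Reals.
From mathcomp Require Import all_boot.
Set Implicit Arguments. Unset Strict Implicit. Unset Printing Implicit Defensive.
Open Scope R_scope.

Definition vec (n : nat) := 'I_n -> R.
Definition mat (n : nat) := 'I_n -> 'I_n -> R.

Definition vsum n (F : 'I_n -> R) : R := \big[Rplus/R0]_(i : 'I_n) F i.

Definition dot n (x y : vec n) : R := vsum (fun i => x i * y i).
Definition vnorm n (x : vec n) : R := sqrt (dot x x).
Definition vadd n (x y : vec n) : vec n := fun i => x i + y i.
Definition vsub n (x y : vec n) : vec n := fun i => x i - y i.

Definition mv n (M : mat n) (v : vec n) : vec n := fun i => vsum (fun j => M i j * v j).
Definition mm n (A B : mat n) : mat n := fun i k => vsum (fun j => A i j * B j k).
Definition madd n (A B : mat n) : mat n := fun i j => A i j + B i j.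
Definition msub n (A B : mat n) : mat n := fun i j => A i j - B i j.
Definition mscale n (a : R) (A : mat n) : mat n := fun i j => a * A i j.
Definition idm n : mat n := fun i j => if i == j then 1 else 0.
Definition mat_symmetric n (A : mat n) : Prop := forall i j, A i j = A j i.

Definition is_spec_norm n (M : mat n) (c : R) : Prop :=
  is_lub (fun t => exists v : vec n, vnorm v <= 1 /\ t = vnorm (mv M v)) c.
Definition spec_norm_le n (M : mat n) (C : R) : Prop :=
  exists c, is_spec_norm M c /\ c <= C.

Definition is_inverse n (M N : mat n) : Prop := mm M N = @idm n /\ mm N M = @idm n.

Definition inv_norm_le n (M : mat n) (C : R) : Prop :=
  exists N, is_inverse M N /\ spec_norm_le N C.

(* extended reals (-oo is excluded: r is proper) *)
Inductive ereal := EFin of R | EPInf.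

Definition closed_set n (S : vec n -> Prop) : Prop :=
  forall x, (forall eps, 0 < eps -> exists y, S y /\ vnorm (vsub y x) < eps) -> S x.

Definition convex_fun n (r : vec n -> ereal) : Prop :=
  forall (x y : vec n) a b th, 0 < th < 1 -> r x = EFin a -> r y = EFin b ->
    exists c, r (fun i => th * x i + (1 - th) * y i) = EFin c /\ c <= th * a + (1 - th) * b.

Definition lsc_fun n (r : vec n -> ereal) : Prop :=
  forall a, closed_set (fun x => exists c, r x = EFin c /\ c <= a).

Definition proper_fun n (r : vec n -> ereal) : Prop := exists x, r x <> EPInf.

Definition is_prox n (Lam : mat n) (r : vec n -> ereal) (x p : vec n) : Prop :=
  exists a, r p = EFin a /\
    forall y b, r y = EFin b ->
      a + / 2 * dot (vsub x p) (mv Lam (vsub x p)) <= b + / 2 * dot (vsub x y) (mv Lam (vsub x y)).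

Definition jacobian_at n (P : vec n -> vec n) (x : vec n) (J : mat n) : Prop :=
  forall eps, 0 < eps -> exists delta, 0 < delta /\ forall y, vnorm (vsub y x) < delta ->
    vnorm (vsub (vsub (P y) (P x)) (mv J (vsub y x))) <= eps * vnorm (vsub y x).

Definition B_subdiff n (P : vec n -> vec n) (u : vec n) (D : mat n) : Prop :=
  exists (uk : nat -> vec n) (Jk : nat -> mat n),
    (forall k, jacobian_at P (uk k) (Jk k)) /\
    (forall eps, 0 < eps -> exists N, forall k, (N <= k)%nat -> vnorm (vsub (uk k) u) < eps) /\
    (forall i j, Un_cv (fun k => Jk k i j) (D i j)).

Definition clarke_jac n (P : vec n -> vec n) (u : vec n) (D : mat n) : Prop :=
  exists (m : nat) (w : 'I_m -> R) (Ds : 'I_m -> mat n),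
    (forall k, 0 <= w k) /\ \big[Rplus/R0]_(k : 'I_m) w k = 1 /\
    (forall k, B_subdiff P u (Ds k)) /\
    D = (fun i j => \big[Rplus/R0]_(k : 'I_m) (w k * Ds k i j)).

Definition in_Mset n (P : vec n -> vec n) (LamInv Hs : mat n) (u : vec n) (M : mat n) : Prop :=
  exists D, clarke_jac P u D /\
    M = madd (msub (@idm n) D) (mm D (mm LamInv Hs)).

(* Main.v *)
Require Import Defs.
From Stdlib Require Import Reals Lra Lia Psatz Classical ClassicalEpsilon FunctionalExtensionality.
From mathcomp Require Import all_boot all_algebra.
From mathcomp Require Import Rstruct.
Set Implicit Arguments. Unset Strict Implicit. Unset Printing Implicit Defensive.
Open Scope R_scope.

Section Basics.
Variable n : nat.
Implicit Types (F G : 'I_n -> R) (x y z v w : vec n) (A B : mat n).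

Lemma vsum_ext F G : (forall i, F i = G i) -> vsum F = vsum G.
Proof. move=> H; rewrite /vsum; apply: eq_bigr => i _; exact: H. Qed.

Lemma vsum_add F G : vsum (fun i => F i + G i) = vsum F + vsum G.
Proof. by rewrite /vsum big_split. Qed.

Lemma vsum_scal c F : vsum (fun i => c * F i) = c * vsum F.
Proof. rewrite /vsum. by rewrite -(@big_distrr R R0 Rmult Rplus). Qed.

Lemma vsum_le F G : (forall i, F i <= G i) -> vsum F <= vsum G.
Proof.
move=> H; rewrite /vsum; apply: (big_ind2 (fun a b => a <= b)); first lra.
- move=> a b c d; lra.
- move=> i _; exact: H.
Qed.

Lemma vsum_ge0 F : (forall i, 0 <= F i) -> 0 <= vsum F.
Proof.
move=> H; rewrite /vsum; apply: (big_ind (fun a => 0 <= a)); first lra.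
- move=> a b; lra.
- move=> i _; exact: H.
Qed.

Lemma vsum_abs F : Rabs (vsum F) <= vsum (fun i => Rabs (F i)).
Proof.
rewrite /vsum; apply: (big_ind2 (fun a b => Rabs a <= b)).
- rewrite Rabs_R0; lra.
- move=> a b c d H1 H2. apply: Rle_trans (Rabs_triang _ _) _. lra.
- move=> i _; lra.
Qed.

Lemma vsum_zero F : (forall i, F i = 0) -> vsum F = 0.
Proof. move=> H; rewrite /vsum big1 // => i _; exact: H. Qed.

Lemma vsum_const c : vsum (fun _ : 'I_n => c) = INR n * c.
Proof.
rewrite /vsum big_const card_ord. elim: n => [|k IH]; first (simpl; lra).
rewrite [iter _ _ _]/= IH S_INR; lra.
Qed.

Lemma vsum_single F i : (forall j, 0 <= F j) -> F i <= vsum F.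
Proof.
move=> H; rewrite /vsum (bigD1 i) //=.
rewrite -[X in X <= _]Rplus_0_r; apply: Rplus_le_compat_l.
apply: (big_ind (fun a => 0 <= a)); [lra | move=> a b; lra | move=> j _; exact: H].
Qed.

Lemma vsum_delta i F : vsum (fun j => (if i == j then 1 else 0) * F j) = F i.
Proof.
rewrite /vsum (bigD1 i) //= eqxx big1 /=; first lra.
move=> j Hj. rewrite eq_sym (negbTE Hj). lra.
Qed.

Lemma vsum_delta' i F : vsum (fun j => F j * (if j == i then 1 else 0)) = F i.
Proof.
rewrite /vsum (bigD1 i) //= eqxx big1 /=; first lra.
move=> j Hj. rewrite (negbTE Hj). lra.
Qed.
End Basics.

Lemma vsum_swap n m (F : 'I_n -> 'I_m -> R) :
  vsum (fun i => vsum (fun j => F i j)) = vsum (fun j => vsum (fun i => F i j)).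
Proof. rewrite /vsum. exact: exchange_big. Qed.

Lemma bigR_swap n m (F : 'I_n -> 'I_m -> R) :
  \big[Rplus/R0]_(i : 'I_n) \big[Rplus/R0]_(j : 'I_m) F i j =
  \big[Rplus/R0]_(j : 'I_m) \big[Rplus/R0]_(i : 'I_n) F i j.
Proof. exact: exchange_big. Qed.
Section Norms.
Variable n : nat.
Implicit Types (F G : 'I_n -> R) (x y z v w : vec n) (A B : mat n).

Lemma dot_comm x y : dot x y = dot y x.
Proof. apply: vsum_ext => i; lra. Qed.

Lemma dot_lin a b x y z : dot (fun i => a * x i + b * y i) z = a * dot x z + b * dot y z.
Proof.
rewrite /dot -!vsum_scal -vsum_add; apply: vsum_ext => i; lra.
Qed.

Lemma dot_linr a b x y z : dot z (fun i => a * x i + b * y i) = a * dot z x + b * dot z y.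
Proof. rewrite dot_comm dot_lin (dot_comm x) (dot_comm y); lra. Qed.

Lemma dot_sub x y z : dot (vsub x y) z = dot x z - dot y z.
Proof.
have -> : vsub x y = (fun i => 1 * x i + (-1) * y i) by apply: functional_extensionality => i; rewrite /vsub; lra.
rewrite dot_lin; lra.
Qed.

Lemma dot_subr x y z : dot z (vsub x y) = dot z x - dot z y.
Proof. rewrite dot_comm dot_sub (dot_comm x) (dot_comm y); lra. Qed.

Lemma dot_add x y z : dot (vadd x y) z = dot x z + dot y z.
Proof.
have -> : vadd x y = (fun i => 1 * x i + 1 * y i) by apply: functional_extensionality => i; rewrite /vadd; lra.
rewrite dot_lin; lra.
Qed.

Lemma dot_scal a x z : dot (fun i => a * x i) z = a * dot x z.
Proof. rewrite /dot -vsum_scal; apply: vsum_ext => i; lra. Qed.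

Lemma dot_self_ge0 x : 0 <= dot x x.
Proof. apply: vsum_ge0 => i; nra. Qed.

Lemma vnorm_ge0 x : 0 <= vnorm x.
Proof. exact: sqrt_pos. Qed.

Lemma vnorm_sq x : vnorm x * vnorm x = dot x x.
Proof. rewrite /vnorm sqrt_sqrt //; exact: dot_self_ge0. Qed.

Lemma vnorm_comp x i : Rabs (x i) <= vnorm x.
Proof.
rewrite /vnorm -sqrt_Rsqr_abs; apply: sqrt_le_1_alt.
rewrite /Rsqr /dot. apply: (vsum_single (F := fun j => x j * x j)) => j; nra.
Qed.

Lemma vnorm0 x : vnorm x = 0 -> x = (fun _ => 0).
Proof.
move=> H; apply: functional_extensionality => i.
have := vnorm_comp x i; rewrite H => Hi. have := Rabs_pos (x i).
move: Hi; case: (Rcase_abs (x i)) => Hc; [rewrite Rabs_left // | rewrite Rabs_right //]; lra.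
Qed.

Lemma vnorm_zero : vnorm (fun _ : 'I_n => 0) = 0.
Proof. rewrite /vnorm /dot vsum_zero ?sqrt_0 // => i; lra. Qed.

Lemma vnorm_scal a x : vnorm (fun i => a * x i) = Rabs a * vnorm x.
Proof.
rewrite /vnorm.
have -> : dot (fun i => a * x i) (fun i => a * x i) = Rsqr a * dot x x.
  rewrite dot_scal dot_comm dot_scal /Rsqr; lra.
rewrite sqrt_mult ?sqrt_Rsqr_abs //; [exact: Rle_0_sqr | exact: dot_self_ge0].
Qed.

Lemma cauchy_schwarz x y : Rabs (dot x y) <= vnorm x * vnorm y.
Proof.
have Hq : forall t, 0 <= dot x x + 2 * t * dot x y + t * t * dot y y.
  move=> t; have := dot_self_ge0 (fun i => 1 * x i + t * y i).
  rewrite dot_lin !dot_linr (dot_comm y x); lra.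
have Hc := dot_self_ge0 y.
have Hnx := vnorm_ge0 x; have Hny := vnorm_ge0 y.
case: (Req_dec (dot y y) 0) => Hc0.
- have Hy : y = (fun _ => 0) by apply: vnorm0; rewrite /vnorm Hc0 sqrt_0.
  have -> : dot x y = 0 by rewrite Hy /dot vsum_zero // => i; lra.
  rewrite Rabs_R0; nra.
- have Hb : dot x y * dot x y <= dot x x * dot y y.
    have := Hq (- dot x y / dot y y).
    have Hcp : 0 < dot y y by lra.
    move=> H.
    have H2 : 0 <= (dot x x + 2 * (- dot x y / dot y y) * dot x y +
           - dot x y / dot y y * (- dot x y / dot y y) * dot y y) * dot y y by apply: Rmult_le_pos; lra.
    have E : (dot x x + 2 * (- dot x y / dot y y) * dot x y +
           - dot x y / dot y y * (- dot x y / dot y y) * dot y y) * dot y y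
           = dot x x * dot y y - dot x y * dot x y by field; lra.
    lra.
  rewrite -(Rabs_right (vnorm x * vnorm y)); last nra.
  apply: Rsqr_le_abs_0. rewrite /Rsqr.
  have -> : vnorm x * vnorm y * (vnorm x * vnorm y) = (vnorm x * vnorm x) * (vnorm y * vnorm y) by ring.
  rewrite !vnorm_sq; lra.
Qed.

Lemma vnorm_triang x y : vnorm (vadd x y) <= vnorm x + vnorm y.
Proof.
have Hnx := vnorm_ge0 x; have Hny := vnorm_ge0 y.
have H : dot (vadd x y) (vadd x y) <= (vnorm x + vnorm y) * (vnorm x + vnorm y).
  rewrite dot_add /dot. rewrite -/(dot x (vadd x y)) -/(dot y (vadd x y)).
  have -> : vadd x y = (fun i => 1 * x i + 1 * y i) by apply: functional_extensionality => i; rewrite /vadd; lra.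
  rewrite !dot_linr. have := cauchy_schwarz x y. have := Rle_abs (dot x y).
  rewrite (dot_comm y x) -!vnorm_sq. nra.
rewrite /vnorm. rewrite -(sqrt_Rsqr (sqrt (dot x x) + sqrt (dot y y))); last (rewrite /vnorm in Hnx Hny; lra).
apply: sqrt_le_1_alt. exact: H.
Qed.

Lemma vnorm_sub_triang x y : vnorm (vsub x y) <= vnorm x + vnorm y.
Proof.
have -> : vsub x y = vadd x (fun i => (-1) * y i) by apply: functional_extensionality => i; rewrite /vsub /vadd; lra.
apply: Rle_trans (vnorm_triang _ _) _. rewrite vnorm_scal Rabs_Ropp Rabs_R1; lra.
Qed.

Lemma vnorm_ext x y : (forall i, x i = y i) -> vnorm x = vnorm y.
Proof. by move=> H; rewrite (functional_extensionality _ _ H). Qed.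

Lemma vnorm_subC x y : vnorm (vsub x y) = vnorm (vsub y x).
Proof.
have -> : vsub x y = (fun i => (-1) * vsub y x i) by apply: functional_extensionality => i; rewrite /vsub; lra.
rewrite vnorm_scal Rabs_Ropp Rabs_R1; lra.
Qed.

Lemma vnorm_rev x y : vnorm x - vnorm y <= vnorm (vsub x y).
Proof.
have : vnorm x <= vnorm (vsub x y) + vnorm y.
  rewrite -(vnorm_ext (x := vadd (vsub x y) y)); first exact: vnorm_triang.
  move=> i; rewrite /vadd /vsub; lra.
lra.
Qed.

Lemma vnorm_dist3 x y z : vnorm (vsub x z) <= vnorm (vsub x y) + vnorm (vsub y z).
Proof.
rewrite -(vnorm_ext (x := vadd (vsub x y) (vsub y z))); first exact: vnorm_triang.
move=> i; rewrite /vadd /vsub; lra.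
Qed.
End Norms.
Section Mats.
Variable n : nat.
Implicit Types (F G : 'I_n -> R) (x y z v w : vec n) (A B : mat n).

Lemma mv_lin A a b x y : mv A (fun i => a * x i + b * y i) = (fun i => a * mv A x i + b * mv A y i).
Proof. apply: functional_extensionality => i; rewrite /mv -!vsum_scal -vsum_add; apply: vsum_ext => j; lra. Qed.

Lemma mv_scal A a x : mv A (fun i => a * x i) = (fun i => a * mv A x i).
Proof. apply: functional_extensionality => i; rewrite /mv -!vsum_scal; apply: vsum_ext => j; lra. Qed.

Lemma mv_sub A x y : mv A (vsub x y) = vsub (mv A x) (mv A y).
Proof.
have -> : vsub x y = (fun i => 1 * x i + (-1) * y i) by apply: functional_extensionality => i; rewrite /vsub; lra.
rewrite mv_lin; apply: functional_extensionality => i; rewrite /vsub; lra.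
Qed.

Lemma mv_add A x y : mv A (vadd x y) = vadd (mv A x) (mv A y).
Proof.
have -> : vadd x y = (fun i => 1 * x i + 1 * y i) by apply: functional_extensionality => i; rewrite /vadd; lra.
rewrite mv_lin; apply: functional_extensionality => i; rewrite /vadd; lra.
Qed.

Lemma mv_zero A : mv A (fun _ => 0) = (fun _ => 0).
Proof. apply: functional_extensionality => i; rewrite /mv vsum_zero // => j; lra. Qed.

Lemma mv_madd A B v : mv (madd A B) v = vadd (mv A v) (mv B v).
Proof. apply: functional_extensionality => i; rewrite /mv /vadd -vsum_add; apply: vsum_ext => j; rewrite /madd; lra. Qed.

Lemma mv_msub A B v : mv (msub A B) v = vsub (mv A v) (mv B v).
Proof.
apply: functional_extensionality => i; rewrite /mv /vsub.
have -> : vsum (fun j => msub A B i j * v j) = vsum (fun j => A i j * v j + (-1) * (B i j * v j)).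
  apply: vsum_ext => j; rewrite /msub; lra.
rewrite vsum_add vsum_scal; lra.
Qed.

Lemma mv_mm A B v : mv (mm A B) v = mv A (mv B v).
Proof.
apply: functional_extensionality => i; rewrite /mv /mm.
have -> : vsum (fun j => vsum (fun k => A i k * B k j) * v j) = vsum (fun j => vsum (fun k => A i k * B k j * v j)).
  apply: vsum_ext => j; rewrite Rmult_comm -vsum_scal; apply: vsum_ext => k; lra.
rewrite vsum_swap; apply: vsum_ext => k; rewrite -vsum_scal; apply: vsum_ext => j; lra.
Qed.

Lemma mv_idm v : mv (@idm n) v = v.
Proof. apply: functional_extensionality => i; rewrite /mv /idm; exact: vsum_delta. Qed.

Lemma dot_sym A x y : mat_symmetric A -> dot (mv A x) y = dot x (mv A y).
Proof.
move=> HA; rewrite /dot /mv.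
have -> : vsum (fun i => vsum (fun j => A i j * x j) * y i) = vsum (fun i => vsum (fun j => A i j * x j * y i)).
  apply: vsum_ext => i; rewrite Rmult_comm -vsum_scal; apply: vsum_ext => k; lra.
rewrite vsum_swap; apply: vsum_ext => j; rewrite -vsum_scal; apply: vsum_ext => i; rewrite (HA i j); lra.
Qed.

Definition frob A := sqrt (vsum (fun i => vsum (fun j => A i j * A i j))).
Definition mbound A b := forall v, vnorm (mv A v) <= b * vnorm v.

Lemma frob_ge0 A : 0 <= frob A.
Proof. exact: sqrt_pos. Qed.

Lemma mbound_frob A : mbound A (frob A).
Proof.
move=> v.
have H : dot (mv A v) (mv A v) <= vsum (fun i => vsum (fun j => A i j * A i j)) * dot v v.
  rewrite /dot Rmult_comm -vsum_scal; apply: vsum_le => i.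
  have Hi := cauchy_schwarz (A i) v.
  have E : mv A v i = dot (A i) v by [].
  rewrite E. have Hc : dot (A i) v * dot (A i) v <= (vnorm (A i) * vnorm v) * (vnorm (A i) * vnorm v).
    have := Rsqr_abs (dot (A i) v); rewrite /Rsqr => ->.
    have := Rabs_pos (dot (A i) v). nra.
  have E2 : vnorm (A i) * vnorm v * (vnorm (A i) * vnorm v) = dot (A i) (A i) * dot v v by rewrite -!vnorm_sq; ring.
  rewrite E2 in Hc. rewrite /dot in Hc *. nra.
rewrite /vnorm /frob -sqrt_mult; [| apply: vsum_ge0 => i; apply: vsum_ge0 => j; nra | exact: dot_self_ge0].
apply: sqrt_le_1_alt; exact: H.
Qed.

Lemma mbound_le A b b' : mbound A b -> b <= b' -> mbound A b'.
Proof. move=> H Hb v; apply: Rle_trans (H v) _; have := vnorm_ge0 v; nra. Qed.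

Lemma frob_entry A e : 0 <= e -> (forall i j, Rabs (A i j) <= e) -> frob A <= INR n * e.
Proof.
move=> He H; rewrite /frob.
have Hn := pos_INR n.
rewrite -(sqrt_Rsqr (INR n * e)); last nra.
apply: sqrt_le_1_alt.
have -> : Rsqr (INR n * e) = vsum (fun _ : 'I_n => vsum (fun _ : 'I_n => e * e)).
  rewrite !vsum_const /Rsqr; ring.
apply: vsum_le => i; apply: vsum_le => j.
have := H i j; have := Rabs_pos (A i j).
have := Rsqr_abs (A i j); rewrite /Rsqr => ->. nra.
Qed.

Definition ej (j : 'I_n) : vec n := fun k => if k == j then 1 else 0.

Lemma mv_ej A i j : mv A (ej j) i = A i j.
Proof. rewrite /mv /ej; exact: vsum_delta'. Qed.

Lemma vnorm_ej j : vnorm (ej j) = 1.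
Proof.
rewrite /vnorm /dot.
have -> : vsum (fun i => ej j i * ej j i) = vsum (fun i => ej j i * (if i == j then 1 else 0)) by [].
rewrite vsum_delta' /ej eqxx; exact: sqrt_1.
Qed.

Lemma mbound_entry A b i j : mbound A b -> Rabs (A i j) <= b.
Proof.
move=> H; rewrite -mv_ej; apply: Rle_trans (vnorm_comp _ i) _.
have := H (ej j); rewrite vnorm_ej; lra.
Qed.

Lemma spec_mbound A b : spec_norm_le A b -> mbound A b.
Proof.
case=> c [[Hub Hlub] Hcb] v.
case: (Req_dec (vnorm v) 0) => Hv.
- rewrite Hv (vnorm0 Hv) mv_zero vnorm_zero; lra.
- have Hp : 0 < vnorm v by have := vnorm_ge0 v; lra.
  set w := fun i => / vnorm v * v i.
  have Hw : vnorm w = 1 by rewrite /w vnorm_scal Rabs_right; [field; lra | apply: Rle_ge; apply: Rlt_le; apply: Rinv_0_lt_compat; lra].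
  have := Hub (vnorm (mv A w)) (ex_intro _ w (conj (Req_le _ _ Hw) erefl)).
  rewrite /w mv_scal vnorm_scal Rabs_right; last (apply: Rle_ge; apply: Rlt_le; apply: Rinv_0_lt_compat; lra).
  move=> H1.
  have : vnorm (mv A v) <= c * vnorm v.
    have E : vnorm (mv A v) = vnorm v * (/ vnorm v * vnorm (mv A v)) by field; lra.
    rewrite E; nra.
  nra.
Qed.

Lemma mbound_spec A b : 0 <= b -> mbound A b -> spec_norm_le A b.
Proof.
move=> Hb H.
set S := fun t => exists v : vec n, vnorm v <= 1 /\ t = vnorm (mv A v).
have Hbd : bound S by exists b => t [v [Hv ->]]; apply: Rle_trans (H v) _; nra.
have Hne : exists t, S t by exists 0, (fun _ => 0); rewrite vnorm_zero mv_zero vnorm_zero; split; lra.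
case: (completeness S Hbd Hne) => c Hc.
exists c; split => //. apply: (proj2 Hc) => t [v [Hv ->]]. apply: Rle_trans (H v) _; nra.
Qed.
End Mats.
Lemma small_param g k Q : (forall th, 0 < th < 1 -> g <= k + th * Q) -> g <= k.
Proof.
move=> H; apply: Rnot_lt_le => Hlt.
set th := Rmin (/2) ((g - k) / (2 * (Rabs Q + 1))).
have HQ := Rabs_pos Q.
have Hp : 0 < (g - k) / (2 * (Rabs Q + 1)) by apply: Rdiv_lt_0_compat; lra.
have Hth : 0 < th < 1 by rewrite /th; split; [apply: Rmin_pos; lra | apply: Rle_lt_trans (Rmin_l _ _) _; lra].
have H1 := H th Hth.
have H2 : th * Q <= th * Rabs Q by apply: Rmult_le_compat_l; [lra | exact: Rle_abs].
have H3 : th * (Rabs Q + 1) <= (g - k) / 2.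
  have : th <= (g - k) / (2 * (Rabs Q + 1)) by exact: Rmin_r.
  move=> h. apply: Rle_trans (Rmult_le_compat_r _ _ _ _ h) _; first lra.
  right; field; lra.
nra.
Qed.

Lemma dot_symC n (A : mat n) x y : mat_symmetric A -> dot x (mv A y) = dot y (mv A x).
Proof. move=> HA; by rewrite dot_comm dot_sym. Qed.

Lemma prox_vi n (Lam : mat n) (r : vec n -> ereal) x p a :
  mat_symmetric Lam -> convex_fun r -> r p = EFin a ->
  (forall y b, r y = EFin b ->
      a + / 2 * dot (vsub x p) (mv Lam (vsub x p)) <= b + / 2 * dot (vsub x y) (mv Lam (vsub x y))) ->
  forall z b, r z = EFin b -> dot (vsub x p) (mv Lam (vsub z p)) <= b - a.
Proof.
move=> HS Hc Hp Hmin z b Hz.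
set g := dot (vsub x p) (mv Lam (vsub z p)).
apply: (small_param (Q := / 2 * dot (vsub z p) (mv Lam (vsub z p)))) => th Hth.
have [c [Hzc Hcle]] := Hc z p b a th Hth Hz Hp.
have := Hmin _ _ Hzc.
have -> : vsub x (fun i => th * z i + (1 - th) * p i) = (fun i => 1 * vsub x p i + (- th) * vsub z p i).
  apply: functional_extensionality => i; rewrite /vsub; ring.
rewrite mv_lin dot_lin !dot_linr.
rewrite (dot_symC (vsub z p) (vsub x p) HS).
rewrite -/g. move=> H.
have : th * g <= th * (b - a + th * (/ 2 * dot (vsub z p) (mv Lam (vsub z p)))) by nra.
move=> H2. apply: (Rmult_le_reg_l th); lra.
Qed.

Lemma prox_lip n (Lam : mat n) (r : vec n -> ereal) (lm : R) x x' p p' :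
  mat_symmetric Lam -> convex_fun r -> 0 < lm -> (forall v, lm * dot v v <= dot v (mv Lam v)) ->
  is_prox Lam r x p -> is_prox Lam r x' p' ->
  lm * vnorm (vsub p p') <= vnorm (mv Lam (vsub x x')).
Proof.
move=> HS Hc Hlm Hlow [a [Ha Hmin]] [a' [Ha' Hmin']].
have V1 := prox_vi HS Hc Ha Hmin Ha'.
have V2 := prox_vi HS Hc Ha' Hmin' Ha.
have Hq : dot (vsub p p') (mv Lam (vsub p p')) <= dot (mv Lam (vsub x x')) (vsub p p').
  move: V1 V2. rewrite dot_sym //.
  rewrite !mv_sub !dot_sub !dot_subr.
  rewrite (dot_symC p' p HS) (dot_symC x' p HS) (dot_symC x p' HS).
  lra.
have Hl := Hlow (vsub p p').
have Hcs := cauchy_schwarz (mv Lam (vsub x x')) (vsub p p').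
have Hab := Rle_abs (dot (mv Lam (vsub x x')) (vsub p p')).
rewrite -vnorm_sq in Hl.
have Hn1 := vnorm_ge0 (vsub p p'); have Hn2 := vnorm_ge0 (mv Lam (vsub x x')).
case: (Req_dec (vnorm (vsub p p')) 0) => H0; first (rewrite H0; nra).
have Hpos : 0 < vnorm (vsub p p') by lra.
apply: (Rmult_le_reg_r (vnorm (vsub p p'))) => //. nra.
Qed.
Lemma jac_bound n (Lam : mat n) (P : vec n -> vec n) lm u J :
  0 < lm -> (forall y u, lm * vnorm (vsub (P y) (P u)) <= vnorm (mv Lam (vsub y u))) ->
  jacobian_at P u J -> forall h, lm * vnorm (mv J h) <= vnorm (mv Lam h).
Proof.
move=> Hlm HP HJ h.
case: (Req_dec (vnorm h) 0) => Hh0.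
  rewrite (vnorm0 Hh0) !mv_zero vnorm_zero; lra.
have Hh : 0 < vnorm h by have := vnorm_ge0 h; lra.
apply: le_epsilon => eps Heps.
have [d [Hd Hjac]] := HJ (eps / (lm * vnorm h)) ltac:(apply: Rdiv_lt_0_compat => //; nra).
set tau := d / (2 * vnorm h).
have Htau : 0 < tau by apply: Rdiv_lt_0_compat; lra.
set y := fun i => u i + tau * h i.
have Eyu : vsub y u = (fun i => tau * h i) by apply: functional_extensionality => i; rewrite /vsub /y; ring.
have Hnyu : vnorm (vsub y u) = tau * vnorm h by rewrite Eyu vnorm_scal Rabs_right; lra.
have Hlt : vnorm (vsub y u) < d by rewrite Hnyu /tau; field_simplify; lra.
have H1 := Hjac y Hlt.
rewrite Eyu mv_scal in H1.
have H2 := vnorm_rev (fun i => tau * mv J h i) (vsub (P y) (P u)).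
rewrite (vnorm_subC (fun i => tau * mv J h i)) vnorm_scal Rabs_right in H2; last lra.
have H3 := HP y u. rewrite Eyu mv_scal vnorm_scal Rabs_right in H3; last lra.
rewrite vnorm_scal Rabs_right in H1; last lra.
have E : eps / (lm * vnorm h) * (tau * vnorm h) = tau * (eps / lm) by field; lra.
rewrite E in H1.
have H4 : lm * (tau * vnorm (mv J h)) <= tau * vnorm (mv Lam h) + tau * eps.
  have : lm * (tau * vnorm (mv J h)) <= lm * (vnorm (vsub (P y) (P u)) + tau * (eps / lm)) by apply: Rmult_le_compat_l; lra.
  have E2 : lm * (vnorm (vsub (P y) (P u)) + tau * (eps / lm)) = lm * vnorm (vsub (P y) (P u)) + tau * eps by field; lra.
  lra.
apply: (Rmult_le_reg_l tau) => //. nra.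
Qed.
Lemma cv_const c : Un_cv (fun _ : nat => c) c.
Proof. move=> e He; exists 0%nat => k _; rewrite /Rdist Rminus_diag Rabs_R0; lra. Qed.

Lemma cv_le u l c : Un_cv u l -> (forall k, u k <= c) -> l <= c.
Proof.
move=> Hu Hk; apply: Rnot_lt_le => Hlt.
have [N HN] := Hu (l - c) ltac:(lra).
have := HN N (le_n _); rewrite /Rdist => H.
have := Hk N. have := Rle_abs (l - u N). rewrite -Rabs_Ropp. have -> : - (l - u N) = u N - l by ring.
lra.
Qed.

Lemma cv_bigsum (I : Type) (s : seq I) (F : nat -> I -> R) (l : I -> R) :
  (forall i, Un_cv (fun k => F k i) (l i)) ->
  Un_cv (fun k => \big[Rplus/R0]_(i <- s) F k i) (\big[Rplus/R0]_(i <- s) l i).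
Proof.
move=> H; elim: s => [|a s IH].
- rewrite big_nil. have E : (fun k : nat => \big[Rplus/R0]_(i <- [::]) F k i) = (fun _ => R0).
    by apply: functional_extensionality => k; rewrite big_nil.
  rewrite E; exact: cv_const.
- rewrite big_cons. have E : (fun k => \big[Rplus/R0]_(i <- a :: s) F k i) = (fun k => F k a + \big[Rplus/R0]_(i <- s) F k i).
    by apply: functional_extensionality => k; rewrite big_cons.
  rewrite E; exact: CV_plus.
Qed.

Lemma cv_vsum n (F : nat -> 'I_n -> R) (l : 'I_n -> R) :
  (forall i, Un_cv (fun k => F k i) (l i)) -> Un_cv (fun k => vsum (F k)) (vsum l).
Proof. move=> H; rewrite /vsum; exact: cv_bigsum. Qed.

Lemma cv_mv n (Jk : nat -> mat n) D h :
  (forall i j, Un_cv (fun k => Jk k i j) (D i j)) -> forall i, Un_cv (fun k => mv (Jk k) h i) (mv D h i).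
Proof.
move=> H i; rewrite /mv; apply: (cv_vsum (F := fun k j => Jk k i j * h j)) => j.
apply: CV_mult; [exact: H | exact: cv_const].
Qed.

Definition JB n (Lam : mat n) lm (D : mat n) := forall h, lm * vnorm (mv D h) <= vnorm (mv Lam h).

Lemma JB_limit n (Lam : mat n) lm (Jk : nat -> mat n) D :
  0 < lm -> (forall k, JB Lam lm (Jk k)) -> (forall i j, Un_cv (fun k => Jk k i j) (D i j)) -> JB Lam lm D.
Proof.
move=> Hlm HJ Hc h.
set c := vnorm (mv Lam h).
have Hc0 : 0 <= c by exact: vnorm_ge0.
have Hd : lm * lm * dot (mv D h) (mv D h) <= c * c.
  apply: (cv_le (u := fun k => lm * lm * dot (mv (Jk k) h) (mv (Jk k) h))).
  - apply: CV_mult; first exact: cv_const.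
    rewrite /dot. apply: (cv_vsum (F := fun k i => mv (Jk k) h i * mv (Jk k) h i)) => i.
    apply: CV_mult; exact: cv_mv.
  - move=> k; have H := HJ k h. rewrite -vnorm_sq. have H0 := vnorm_ge0 (mv (Jk k) h).
    have H1 : 0 <= lm * vnorm (mv (Jk k) h) by nra.
    apply: Rle_trans (_ : (lm * vnorm (mv (Jk k) h)) * (lm * vnorm (mv (Jk k) h)) <= _); first (right; ring).
    apply: Rmult_le_compat; rewrite /c in Hc0 *; lra.
rewrite -vnorm_sq in Hd.
have Hn := vnorm_ge0 (mv D h).
have : Rsqr (lm * vnorm (mv D h)) <= Rsqr c by rewrite /Rsqr; nra.
move=> H; apply: Rsqr_incr_0_var => //; nra.
Qed.

Lemma vnorm_bigsum n (I : Type) (s : seq I) (g : I -> vec n) :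
  vnorm (fun i => \big[Rplus/R0]_(k <- s) g k i) <= \big[Rplus/R0]_(k <- s) vnorm (g k).
Proof.
elim: s => [|a s IH].
- rewrite big_nil. rewrite (vnorm_ext (y := fun _ => 0)); first (rewrite vnorm_zero; lra).
  move=> i; by rewrite big_nil.
- rewrite big_cons (vnorm_ext (y := vadd (g a) (fun i => \big[Rplus/R0]_(k <- s) g k i))).
  + apply: Rle_trans (vnorm_triang _ _) _; lra.
  + move=> i; by rewrite big_cons.
Qed.

Lemma JB_convex n (Lam : mat n) lm m (w : 'I_m -> R) (Ds : 'I_m -> mat n) :
  0 < lm -> (forall k, 0 <= w k) -> vsum w = 1 -> (forall k, JB Lam lm (Ds k)) ->
  JB Lam lm (fun i j => \big[Rplus/R0]_(k : 'I_m) (w k * Ds k i j)).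
Proof.
move=> Hlm Hw Hs HJ h.
have E : mv (fun i j => \big[Rplus/R0]_(k : 'I_m) (w k * Ds k i j)) h
         = (fun i => \big[Rplus/R0]_(k : 'I_m) (fun i => w k * mv (Ds k) h i) i).
  apply: functional_extensionality => i; rewrite /mv.
  change (vsum (fun j => vsum (fun k => w k * Ds k i j) * h j) = vsum (fun k => w k * vsum (fun j => Ds k i j * h j))).
  have -> : vsum (fun j => vsum (fun k => w k * Ds k i j) * h j) = vsum (fun j => vsum (fun k => w k * Ds k i j * h j)).
    apply: vsum_ext => j; rewrite Rmult_comm -vsum_scal; apply: vsum_ext => k; ring.
  rewrite vsum_swap; apply: vsum_ext => k; rewrite -vsum_scal; apply: vsum_ext => j; ring.
rewrite E.
have H1 := vnorm_bigsum (index_enum 'I_m) (fun k i => w k * mv (Ds k) h i).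
have H2 : lm * \big[Rplus/R0]_(k : 'I_m) vnorm (fun i => w k * mv (Ds k) h i) <= vnorm (mv Lam h).
  change (lm * vsum (fun k => vnorm (fun i => w k * mv (Ds k) h i)) <= vnorm (mv Lam h)).
  rewrite -vsum_scal.
  apply: Rle_trans (vsum_le (G := fun k => w k * vnorm (mv Lam h)) _) _.
  - move=> k; rewrite vnorm_scal Rabs_right; last (have := Hw k; lra).
    have := HJ k h; have := Hw k; nra.
  - rewrite (vsum_ext (G := fun k => vnorm (mv Lam h) * w k)); last (move=> k; ring).
    rewrite vsum_scal Hs; lra.
apply: Rle_trans H2. apply: Rmult_le_compat_l; [lra | exact: H1].
Qed.
Lemma fin_ev (T : finType) (P : T -> nat -> Prop) :
  (forall t, exists N, forall k, (N <= k)%nat -> P t k) ->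
  exists N, forall t k, (N <= k)%nat -> P t k.
Proof.
move=> H.
have : forall s : seq T, exists N, forall t k, t \in s -> (N <= k)%nat -> P t k.
  elim=> [|a s [N IH]]; first by exists 0%nat.
  have [Na Ha] := H a.
  exists (maxn N Na) => t k; rewrite inE => /orP [/eqP -> | Ht] Hk.
  - apply: Ha; exact: leq_trans (leq_maxr _ _) Hk.
  - apply: IH => //; exact: leq_trans (leq_maxl _ _) Hk.
move=> /(_ (enum T)) [N HN]; exists N => t k Hk; apply: HN => //; by rewrite mem_enum.
Qed.

Lemma fin_delta (T : finType) (Q : T -> R -> Prop) :
  (forall t, exists d, 0 < d /\ forall d', 0 < d' <= d -> Q t d') ->
  exists d, 0 < d /\ forall t, Q t d.
Proof.
move=> H.
have : forall s : seq T, exists d, 0 < d /\ forall t d', t \in s -> 0 < d' <= d -> Q t d'.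
  elim=> [|a s [d [Hd IH]]]; first by exists 1; split => //; lra.
  have [da [Hda Ha]] := H a.
  exists (Rmin d da); split; first exact: Rmin_pos.
  move=> t d'; rewrite inE => /orP [/eqP -> | Ht] Hd'.
  - apply: Ha; have := Rmin_r d da; lra.
  - apply: IH => //; have := Rmin_l d da; lra.
move=> /(_ (enum T)) [d [Hd HN]]; exists d; split => // t; apply: HN; [by rewrite mem_enum | lra].
Qed.

Lemma eps_nat eps : 0 < eps -> exists N, / INR (S N) < eps.
Proof.
move=> He; have [N [HN HN0]] := archimed_cor1 eps He.
exists N; apply: Rle_lt_trans HN.
apply: Rinv_le_contravar; [apply: lt_0_INR; exact: HN0 | apply: le_INR; lia].
Qed.

Lemma inv_S_le (a b : nat) : (a <= b)%nat -> / INR (S b) <= / INR (S a).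
Proof.
move=> /leP H; apply: Rinv_le_contravar; [apply: lt_0_INR; lia | apply: le_INR; lia].
Qed.

Lemma strict_ge (phi : nat -> nat) : (forall k, (phi k < phi k.+1)%nat) -> forall k, (k <= phi k)%nat.
Proof. move=> H; elim=> [|k IH] //; exact: leq_ltn_trans IH (H k). Qed.

Lemma strict_mono (phi : nat -> nat) : (forall k, (phi k < phi k.+1)%nat) -> forall a b, (a <= b)%nat -> (phi a <= phi b)%nat.
Proof.
move=> H a b /subnKC <-. elim: (b - a)%nat => [|d IH]; first by rewrite addn0.
rewrite addnS; exact: leq_trans IH (ltnW (H _)).
Qed.

Lemma cv_subseq u l (phi : nat -> nat) : (forall k, (phi k < phi k.+1)%nat) -> Un_cv u l -> Un_cv (fun k => u (phi k)) l.
Proof.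
move=> Hp Hu e He; have [N HN] := Hu e He; exists N => k Hk; apply: HN.
apply/leP; apply: leq_trans (strict_ge Hp k); exact/leP.
Qed.

Lemma BW1 (x : nat -> R) B : (forall k, Rabs (x k) <= B) ->
  exists phi : nat -> nat, (forall k, (phi k < phi k.+1)%nat) /\ exists l, Un_cv (fun k => x (phi k)) l.
Proof.
move=> HB.
have Hb : forall k, - B <= x k <= B.
  move=> k; have := HB k; have := Rle_abs (x k); have := Rle_abs (- x k); rewrite Rabs_Ropp; lra.
have [l Hl] := @Bolzano_Weierstrass x (fun c => - B <= c <= B) (compact_P3 (- B) B) Hb.
have Hcl : forall N k, exists p, (N <= p)%nat /\ Rabs (x p - l) < / INR (S k).
  move=> N k.
  have Hpos : 0 < / INR (S k) by apply: Rinv_0_lt_compat; apply: lt_0_INR; lia.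
  have Hnb : neighbourhood (fun y => Rabs (y - l) < / INR (S k)) l.
    exists (mkposreal _ Hpos) => y Hy; exact: Hy.
  have [p [Hp Hv]] := Hl (fun y => Rabs (y - l) < / INR (S k)) N Hnb.
  exists p; split => //; exact/leP.
pose sel N k := proj1_sig (constructive_indefinite_description _ (Hcl N k)).
have Hsel : forall N k, (N <= sel N k)%nat /\ Rabs (x (sel N k) - l) < / INR (S k).
  move=> N k; exact: (proj2_sig (constructive_indefinite_description _ (Hcl N k))).
pose fix phi k := match k with 0%nat => sel 0%nat 0%nat | S k' => sel (S (phi k')) (S k') end.
exists phi; split.
- move=> k /=; exact: (proj1 (Hsel _ _)).
- exists l => e He. have [N HN] := eps_nat He. exists N => k Hk.
  rewrite /Rdist.
  have H1 : Rabs (x (phi k) - l) < / INR (S k) by case: k Hk => [|k] Hk /=; exact: (proj2 (Hsel _ _)).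
  apply: Rlt_le_trans H1 _. apply: Rle_trans (inv_S_le (a := N) (b := k) _) _; last lra.
  exact/leP.
Qed.

Lemma BWm n (a : nat -> mat n) B : (forall k i j, Rabs (a k i j) <= B) ->
  exists phi : nat -> nat, (forall k, (phi k < phi k.+1)%nat) /\
  exists D : mat n, forall i j, Un_cv (fun k => a (phi k) i j) (D i j).
Proof.
move=> HB.
have : forall s : seq ('I_n * 'I_n), exists phi : nat -> nat, (forall k, (phi k < phi k.+1)%nat) /\
    forall p, p \in s -> exists l, Un_cv (fun k => a (phi k) p.1 p.2) l.
  elim=> [|q s [phi [Hphi IH]]]; first by exists id.
  have [psi [Hpsi [l Hl]]] := BW1 (x := fun k => a (phi k) q.1 q.2) (fun k => HB _ _ _).
  exists (fun k => phi (psi k)); split.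
  - move=> k /=; apply: leq_trans (Hphi (psi k)) _; apply: (strict_mono Hphi); exact: (Hpsi k).
  - move=> p; rewrite inE => /orP [/eqP -> | Hp]; first by exists l.
    have [l' Hl'] := IH p Hp; exists l'.
    exact: (cv_subseq (u := fun k => a (phi k) p.1 p.2)).
move=> /(_ (enum {: 'I_n * 'I_n})) [phi [Hphi Hall]].
exists phi; split => //.
have Hex : forall i j, exists l, Un_cv (fun k => a (phi k) i j) l.
  move=> i j; exact: (Hall (i, j) (mem_enum _ _)).
exists (fun i j => proj1_sig (constructive_indefinite_description _ (Hex i j))).
move=> i j; exact: (proj2_sig (constructive_indefinite_description _ (Hex i j))).
Qed.
Lemma JB_mbound n (Lam : mat n) lm D : 0 < lm -> JB Lam lm D -> mbound D (frob Lam / lm).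
Proof.
move=> Hlm HJ v; have := HJ v; have := mbound_frob Lam v => H1 H2.
apply: (Rmult_le_reg_l lm) => //.
have -> : lm * (frob Lam / lm * vnorm v) = frob Lam * vnorm v by field; lra.
lra.
Qed.

Lemma usc_jac n (Lam : mat n) lm (P : vec n -> vec n) ustar :
  0 < lm -> (forall y u, lm * vnorm (vsub (P y) (P u)) <= vnorm (mv Lam (vsub y u))) ->
  forall e, 0 < e -> exists d, 0 < d /\ forall u J, vnorm (vsub u ustar) < d -> jacobian_at P u J ->
    exists Dst, B_subdiff P ustar Dst /\ forall i j, Rabs (J i j - Dst i j) <= e.
Proof.
move=> Hlm HP e He.
apply: NNPP => Hn.
have Hseq : forall k : nat, exists uJ : vec n * mat n, vnorm (vsub uJ.1 ustar) < / INR (S k) /\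
    jacobian_at P uJ.1 uJ.2 /\ forall Dst, B_subdiff P ustar Dst -> ~ (forall i j, Rabs (uJ.2 i j - Dst i j) <= e).
  move=> k; apply: NNPP => Hk; apply: Hn.
  exists (/ INR (S k)); split; first (apply: Rinv_0_lt_compat; apply: lt_0_INR; lia).
  move=> u J Hu HJ; apply: NNPP => Hno; apply: Hk.
  exists (u, J); split => //; split => // Dst HB Hc; apply: Hno; by exists Dst.
pose s k := proj1_sig (constructive_indefinite_description _ (Hseq k)).
have Hs : forall k, vnorm (vsub (s k).1 ustar) < / INR (S k) /\
    jacobian_at P (s k).1 (s k).2 /\ forall Dst, B_subdiff P ustar Dst -> ~ (forall i j, Rabs ((s k).2 i j - Dst i j) <= e).
  move=> k; exact: (proj2_sig (constructive_indefinite_description _ (Hseq k))).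
have Hbd : forall k i j, Rabs ((s k).2 i j) <= frob Lam / lm.
  move=> k i j; apply: mbound_entry; apply: JB_mbound => //.
  move=> h; exact: (jac_bound Hlm HP (proj1 (proj2 (Hs k)))).
have [phi [Hphi [D HD]]] := BWm Hbd.
have HB : B_subdiff P ustar D.
  exists (fun k => (s (phi k)).1), (fun k => (s (phi k)).2); split; last split.
  - move=> k; exact: (proj1 (proj2 (Hs (phi k)))).
  - move=> eps Heps; have [N HN] := eps_nat Heps; exists N => k Hk.
    apply: Rlt_le_trans (proj1 (Hs (phi k))) _.
    apply: Rle_trans (inv_S_le (a := N) (b := phi k) _) _; last lra.
    exact: leq_trans Hk (strict_ge Hphi k).
  - exact: HD.
have Hij : forall i j, exists N, forall k, (N <= k)%nat -> Rabs ((s (phi k)).2 i j - D i j) < e.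
  move=> i j; have [N HN] := HD i j e He; exists N => k Hk; apply: HN; exact/leP.
have Hi : forall i, exists N, forall k, (N <= k)%nat -> forall j, Rabs ((s (phi k)).2 i j - D i j) < e.
  move=> i; have [N HN] := fin_ev (P := fun j k => Rabs ((s (phi k)).2 i j - D i j) < e) (Hij i).
  exists N => k Hk j; exact: HN.
have [N HN] := fin_ev (P := fun i k => forall j, Rabs ((s (phi k)).2 i j - D i j) < e) Hi.
exact: (proj2 (proj2 (Hs (phi N))) D HB (fun i j => Rlt_le _ _ (HN i N (leqnn N) j))).
Qed.
Lemma usc_B n (Lam : mat n) lm (P : vec n -> vec n) ustar :
  0 < lm -> (forall y u, lm * vnorm (vsub (P y) (P u)) <= vnorm (mv Lam (vsub y u))) ->
  forall e, 0 < e -> exists d, 0 < d /\ forall u D, vnorm (vsub u ustar) < d -> B_subdiff P u D ->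
    exists Dst, B_subdiff P ustar Dst /\ forall i j, Rabs (D i j - Dst i j) <= 2 * e.
Proof.
move=> Hlm HP e He.
have [d0 [Hd0 H0]] := usc_jac ustar Hlm HP He.
exists (d0 / 2); split; first lra.
move=> u D Hu [uk [Jk [Hjac [Hconv Hent]]]].
have [N1 HN1] := Hconv (d0 / 2) ltac:(lra).
have Hij : forall i j, exists N, forall k, (N <= k)%nat -> Rabs (Jk k i j - D i j) < e.
  move=> i j; have [N HN] := Hent i j e He; exists N => k Hk; apply: HN; exact/leP.
have Hi : forall i, exists N, forall k, (N <= k)%nat -> forall j, Rabs (Jk k i j - D i j) < e.
  move=> i; have [N HN] := fin_ev (P := fun j k => Rabs (Jk k i j - D i j) < e) (Hij i).
  exists N => k Hk j; exact: HN.
have [N2 HN2] := fin_ev (P := fun i k => forall j, Rabs (Jk k i j - D i j) < e) Hi.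
set k := maxn N1 N2.
have Hk1 := HN1 k (leq_maxl _ _).
have Hk2 := fun i => HN2 i k (leq_maxr _ _).
have Hd : vnorm (vsub (uk k) ustar) < d0.
  have := vnorm_dist3 (uk k) u ustar; lra.
have [Dst [HB Hc]] := H0 _ _ Hd (Hjac k).
exists Dst; split => // i j.
have := Hk2 i j; have := Hc i j.
have E : D i j - Dst i j = (Jk k i j - Dst i j) - (Jk k i j - D i j) by ring.
rewrite E => h1 h2. apply: Rle_trans (Rabs_triang _ _) _. rewrite Rabs_Ropp. lra.
Qed.

Lemma usc_C n (Lam : mat n) lm (P : vec n -> vec n) ustar :
  0 < lm -> (forall y u, lm * vnorm (vsub (P y) (P u)) <= vnorm (mv Lam (vsub y u))) ->
  forall e, 0 < e -> exists d, 0 < d /\ forall u D, vnorm (vsub u ustar) < d -> clarke_jac P u D ->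
    exists Dst, clarke_jac P ustar Dst /\ forall i j, Rabs (D i j - Dst i j) <= 2 * e.
Proof.
move=> Hlm HP e He.
have [d [Hd H0]] := usc_B ustar Hlm HP He.
exists d; split => // u D Hu [m [w [Ds [Hw [Hws [HB ->]]]]]].
have Hex : forall k, exists Dst, B_subdiff P ustar Dst /\ forall i j, Rabs (Ds k i j - Dst i j) <= 2 * e.
  move=> k; exact: H0 _ _ Hu (HB k).
pose Dk k := proj1_sig (constructive_indefinite_description _ (Hex k)).
have HDk : forall k, B_subdiff P ustar (Dk k) /\ forall i j, Rabs (Ds k i j - Dk k i j) <= 2 * e.
  move=> k; exact: (proj2_sig (constructive_indefinite_description _ (Hex k))).
exists (fun i j => \big[Rplus/R0]_(k : 'I_m) (w k * Dk k i j)); split.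
- exists m, w, Dk; split => //; split => //; split => // k; exact: (proj1 (HDk k)).
- move=> i j.
  change (Rabs (vsum (fun k => w k * Ds k i j) - vsum (fun k => w k * Dk k i j)) <= 2 * e).
  have -> : vsum (fun k => w k * Ds k i j) - vsum (fun k => w k * Dk k i j) = vsum (fun k => w k * (Ds k i j - Dk k i j)).
    rewrite (vsum_ext (F := fun k => w k * (Ds k i j - Dk k i j)) (G := fun k => w k * Ds k i j + (-1) * (w k * Dk k i j))); last (move=> k; ring).
    rewrite vsum_add vsum_scal; ring.
  apply: Rle_trans (vsum_abs _) _.
  apply: Rle_trans (vsum_le (G := fun k => 2 * e * w k) _) _.
  + move=> k; rewrite Rabs_mult Rabs_right; last (have := Hw k; lra).
    have := (proj2 (HDk k)) i j; have := Hw k; nra.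
  + have Hws' : vsum w = 1 by exact: Hws. rewrite vsum_scal Hws'; lra.
Qed.
Lemma mm_tomx n (A B : mat n) :
  mm A B = (fun i j => ((((\matrix_(i, j) A i j)%R : 'M[R]_n) *m (\matrix_(i, j) B i j)%R) i j)%R).
Proof.
apply: functional_extensionality => i; apply: functional_extensionality => j.
rewrite mxE /mm /vsum; apply: eq_bigr => k _; rewrite !mxE; reflexivity.
Qed.

Lemma idm_tomx n : @idm n = (fun i j => ((1%:M : 'M[R]_n) i j)%R).
Proof.
apply: functional_extensionality => i; apply: functional_extensionality => j.
rewrite mxE /idm; case: (i == j); reflexivity.
Qed.

Lemma inv_from_lower n (M : mat n) c : 0 < c -> (forall v, c * vnorm v <= vnorm (mv M v)) ->
  exists N, is_inverse M N /\ mbound N (/ c).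
Proof.
move=> Hc Hlow.
pose A : 'M[R]_n := (\matrix_(i, j) M i j)%R.
have Hinj : forall v, mv M v = (fun _ => 0) -> v = (fun _ => 0).
  move=> v Hv; apply: vnorm0; have := Hlow v; rewrite Hv vnorm_zero; have := vnorm_ge0 v; nra.
have HA : A \in unitmx.
  rewrite -unitmx_tr -row_free_unit -kermx_eq0.
  apply/eqP; apply/matrixP => i j; rewrite [RHS]mxE.
  set K := (kermx A^T)%R.
  pose v : vec n := fun j => K i j.
  have Hv : mv M v = (fun _ => 0).
    apply: functional_extensionality => i'.
    have H := congr1 (fun X : 'M[R]_n => X i i') (mulmx_ker A^T)%R; rewrite /= !mxE in H.
    rewrite /mv /vsum. etransitivity; last exact: H.
    apply: eq_bigr => k _.
    have HAt : forall a b, (A^T)%R a b = M b a by move=> a b; rewrite !mxE.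
    rewrite HAt /v; exact: Rmult_comm.
  have := congr1 (fun f => f j) (Hinj v Hv); rewrite /v => ->; reflexivity.
pose N : mat n := fun i j => invmx A i j.
have HAN : mm M N = @idm n.
  rewrite mm_tomx idm_tomx.
  have -> : ((\matrix_(i, j) N i j)%R : 'M[R]_n) = invmx A by apply/matrixP => i j; rewrite mxE.
  by rewrite -/A mulmxV.
have HNA : mm N M = @idm n.
  rewrite mm_tomx idm_tomx.
  have -> : ((\matrix_(i, j) N i j)%R : 'M[R]_n) = invmx A by apply/matrixP => i j; rewrite mxE.
  by rewrite -/A mulVmx.
exists N; split; first by split.
move=> w; have := Hlow (mv N w); rewrite -mv_mm HAN mv_idm => H.
apply: (Rmult_le_reg_l c) => //.
have -> : c * (/ c * vnorm w) = vnorm w by field; lra.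
exact: H.
Qed.
Lemma JB_clarke n (Lam : mat n) lm (P : vec n -> vec n) u D :
  0 < lm -> (forall y u, lm * vnorm (vsub (P y) (P u)) <= vnorm (mv Lam (vsub y u))) ->
  clarke_jac P u D -> JB Lam lm D.
Proof.
move=> Hlm HP [m [w [Ds [Hw [Hws [HB ->]]]]]].
apply: JB_convex => //.
move=> k; have [uk [Jk [Hj [_ Hc]]]] := HB k.
apply: (JB_limit (Jk := Jk)) => // k'.
move=> h; exact: (jac_bound Hlm HP (Hj k')).
Qed.

Lemma mbound_diff_entry n (A B : mat n) e : 0 <= e -> (forall i j, Rabs (A i j - B i j) <= e) ->
  mbound (msub A B) (INR n * e).
Proof.
move=> He H; apply: mbound_le (mbound_frob _) _; apply: frob_entry => // i j; exact: H.
Qed.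
Unset Implicit Arguments.
Theorem lemma4p3
  (n : nat)
  (f : vec n -> R) (gradf : vec n -> vec n) (hessf : vec n -> mat n) (L : R)
  (r : vec n -> ereal) (prox : vec n -> vec n)
  (xstar : vec n) (Lam LamInv : mat n) (lm lM C : R)
  (* f is twice continuously differentiable, with gradient gradf and Hessian hessf *)
  (Hgrad : forall x eps, 0 < eps -> exists delta, 0 < delta /\ forall y,
      vnorm (vsub y x) < delta ->
      Rabs (f y - f x - dot (gradf x) (vsub y x)) <= eps * vnorm (vsub y x))
  (Hhess : forall x, jacobian_at gradf x (hessf x))
  (Hhess_cont : forall x i j eps, 0 < eps -> exists delta, 0 < delta /\ forall y,
      vnorm (vsub y x) < delta -> Rabs (hessf y i j - hessf x i j) < eps)
  (* gradf is L-Lipschitz *)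
  (Hlip : forall x y, vnorm (vsub (gradf x) (gradf y)) <= L * vnorm (vsub x y))
  (* r convex, lsc, proper; prox = prox^{Lam}_r *)
  (Hrconv : convex_fun r) (Hrlsc : lsc_fun r) (Hrprop : proper_fun r)
  (Hprox : forall x, is_prox Lam r x (prox x))
  (* Lam in S^n_{++}, lM I >= Lam >= lm I, lm > 0, LamInv = Lam^{-1} *)
  (HLsym : mat_symmetric Lam) (Hlm : 0 < lm)
  (HLlow : forall v, lm * dot v v <= dot v (mv Lam v))
  (HLup : forall v, dot v (mv Lam v) <= lM * dot v v)
  (HLinv : is_inverse Lam LamInv)
  (HC : 0 < C)
  (* every M in M^{Lam}(xstar) is nonsingular with ||M^{-1}|| <= C *)
  (Hreg : forall M,
      in_Mset prox LamInv (hessf xstar) (vsub xstar (mv LamInv (gradf xstar))) M ->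
      inv_norm_le M C) :
  forall bc gc, 0 < bc < 1 -> 0 < gc < bc / C ->
  exists epsc, 0 < epsc /\
    forall (Sb Tb : Type) (G : Sb -> vec n -> vec n) (H : Tb -> vec n -> mat n),
    (forall t x, mat_symmetric (H t x)) ->
    forall (s : Sb) (t : Tb) (x : vec n),
      vnorm (vsub x xstar) < epsc ->
      vnorm (vsub (gradf x) (G s x)) <= epsc ->
      spec_norm_le (msub (hessf x) (H t x)) (/ 2 * lm * gc) ->
      forall M, in_Mset prox LamInv (H t x) (vsub x (mv LamInv (G s x))) M ->
        inv_norm_le M (C / (1 - bc)).
Proof.
move=> bc gc Hbc Hgc.
set P := prox.
have HP : forall y u, lm * vnorm (vsub (P y) (P u)) <= vnorm (mv Lam (vsub y u)).
  move=> y u; exact: prox_lip HLsym Hrconv Hlm HLlow (Hprox y) (Hprox u).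
set ustar := vsub xstar (mv LamInv (gradf xstar)).
set bI := frob LamInv.
set hs := frob (hessf xstar).
have HbI : 0 <= bI := frob_ge0 _.
have Hhs : 0 <= hs := frob_ge0 _.
have Hn := pos_INR n.
have HLL : forall z, mv Lam (mv LamInv z) = z.
  move=> z; rewrite -mv_mm (proj1 HLinv) mv_idm //.
have HC1 : 0 < bc / C by apply: Rdiv_lt_0_compat; lra.
have Hgc0 : 0 < gc by lra.
set e2 := lm * gc / (4 * (INR n + 1)).
have He2 : 0 < e2 by rewrite /e2; apply: Rdiv_lt_0_compat; nra.
have [dH [HdH HHc]] : exists d, 0 < d /\ forall i j y, vnorm (vsub y xstar) < d -> Rabs (hessf y i j - hessf xstar i j) < e2.
  have Hi : forall i, exists d, 0 < d /\ forall d', 0 < d' <= d -> forall j y, vnorm (vsub y xstar) < d' -> Rabs (hessf y i j - hessf xstar i j) < e2.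
    move=> i.
    have Hq : forall j, exists d, 0 < d /\ forall d', 0 < d' <= d -> forall y, vnorm (vsub y xstar) < d' -> Rabs (hessf y i j - hessf xstar i j) < e2.
      move=> j; have [d [Hd Hy]] := Hhess_cont xstar i j e2 He2.
      exists d; split => // d' Hd' y Hy'; apply: Hy; lra.
    have [d [Hd Hj]] := fin_delta (Q := fun j d => forall y, vnorm (vsub y xstar) < d -> Rabs (hessf y i j - hessf xstar i j) < e2) Hq.
    exists d; split => // d' Hd' j y Hy; apply: Hj; lra.
  have [d [Hd Hall]] := fin_delta Hi.
  exists d; split => // i j y Hy; exact: Hall i d ltac:(lra) j y Hy.
set K1 := 1 + bI * (lm * gc + hs).
have HK1 : 1 <= K1.
  have : 0 <= bI * (lm * gc + hs) by apply: Rmult_le_pos; nra.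
  rewrite /K1; lra.
set e := gc / (4 * (INR n + 1) * K1).
have He : 0 < e by rewrite /e; apply: Rdiv_lt_0_compat => //; apply: Rmult_lt_0_compat; lra.
have [dU [HdU HU]] := usc_C ustar Hlm HP (e := e / 2) ltac:(lra).
set K2 := 1 + bI * (1 + Rabs L).
have HK2 : 1 <= K2.
  have := Rabs_pos L => HL0.
  have : 0 <= bI * (1 + Rabs L) by apply: Rmult_le_pos; lra.
  rewrite /K2; lra.
exists (Rmin dH (dU / (2 * K2))); split.
  apply: Rmin_pos => //; apply: Rdiv_lt_0_compat; lra.
move=> Sb Tb G H Hsym s t x Hx HG HH M [D [HD ->]].
have Hx1 : vnorm (vsub x xstar) < dH by have := Rmin_l dH (dU / (2 * K2)); lra.
have Hx2 : vnorm (vsub x xstar) < dU / (2 * K2) by have := Rmin_r dH (dU / (2 * K2)); lra.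
have HG2 : vnorm (vsub (gradf x) (G s x)) <= dU / (2 * K2) by have := Rmin_r dH (dU / (2 * K2)); lra.
set Ht := H t x. set Hxm := hessf x. set Hs := hessf xstar.
set u := vsub x (mv LamInv (G s x)).
set t0 := dU / (2 * K2) in Hx2 HG2 *.
have Ht0 : 0 < t0 by rewrite /t0; apply: Rdiv_lt_0_compat; lra.
have Hu : vnorm (vsub u ustar) < dU.
  have E : vsub u ustar = vsub (vsub x xstar) (mv LamInv (vsub (G s x) (gradf xstar))).
    rewrite mv_sub; apply: functional_extensionality => i; rewrite /u /ustar /vsub; ring.
  rewrite E.
  have H1 := vnorm_sub_triang (vsub x xstar) (mv LamInv (vsub (G s x) (gradf xstar))).
  have H2 := mbound_frob LamInv (vsub (G s x) (gradf xstar)). rewrite -/bI in H2.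
  have H3 := vnorm_dist3 (G s x) (gradf x) (gradf xstar).
  rewrite (vnorm_subC (G s x) (gradf x)) in H3.
  have H4 := Hlip x xstar.
  have H5 : L * vnorm (vsub x xstar) <= Rabs L * vnorm (vsub x xstar).
    apply: Rmult_le_compat_r; [exact: vnorm_ge0 | exact: Rle_abs].
  have HL0 := Rabs_pos L. have Hv0 := vnorm_ge0 (vsub x xstar).
  have H6 : vnorm (vsub (G s x) (gradf xstar)) <= t0 + Rabs L * t0.
    have : Rabs L * vnorm (vsub x xstar) <= Rabs L * t0 by apply: Rmult_le_compat_l; lra.
    lra.
  have H7 : bI * vnorm (vsub (G s x) (gradf xstar)) <= bI * (t0 + Rabs L * t0) by apply: Rmult_le_compat_l.
  have HK2' := HK2. rewrite /K2 in HK2'.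
  have H8 : t0 + bI * (t0 + Rabs L * t0) = dU / 2 by rewrite /t0 /K2; field; lra.
  lra.
have [Dst [HDst Hclose]] := HU u D Hu HD.
have JBst := JB_clarke Hlm HP HDst.
set Mst := madd (msub (@idm n) Dst) (mm Dst (mm LamInv Hs)).
have [Nst [HinvSt HnSt]] := Hreg Mst (ex_intro _ Dst (conj HDst erefl)).
have HlowSt : forall v, vnorm v <= C * vnorm (mv Mst v).
  move=> v; have := spec_mbound HnSt (mv Mst v).
  by rewrite -mv_mm (proj2 HinvSt) mv_idm.
set E := msub D Dst.
have HE : mbound E (INR n * e).
  apply: mbound_diff_entry; first lra. move=> i j; have := Hclose i j; lra.
have HHx : mbound (msub Hxm Ht) (/ 2 * lm * gc) := spec_mbound HH.
have HHs : mbound (msub Hxm Hs) (INR n * e2).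
  apply: mbound_diff_entry; first lra. move=> i j; apply: Rlt_le; exact: HHc.
have Hne2 : INR n * e2 <= lm * gc / 4.
  rewrite /e2. apply: (Rmult_le_reg_r (4 * (INR n + 1))); first lra.
  have -> : INR n * (lm * gc / (4 * (INR n + 1))) * (4 * (INR n + 1)) = INR n * (lm * gc) by field; lra.
  have -> : lm * gc / 4 * (4 * (INR n + 1)) = (INR n + 1) * (lm * gc) by field.
  have : 0 < lm * gc by nra. nra.
have HneK : INR n * e * K1 <= gc / 4.
  rewrite /e. have -> : INR n * (gc / (4 * (INR n + 1) * K1)) * K1 = INR n * gc / (4 * (INR n + 1)) by field; lra.
  apply: (Rmult_le_reg_r (4 * (INR n + 1))); first lra.
  have -> : INR n * gc / (4 * (INR n + 1)) * (4 * (INR n + 1)) = INR n * gc by field; lra.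
  have -> : gc / 4 * (4 * (INR n + 1)) = (INR n + 1) * gc by field.
  nra.
have Hpert : forall v, vnorm (vsub (mv (madd (msub (@idm n) D) (mm D (mm LamInv Ht))) v) (mv Mst v)) <= gc * vnorm v.
  move=> v.
  set z := vsub (mv Ht v) (mv Hs v).
  have Eq : vsub (mv (madd (msub (@idm n) D) (mm D (mm LamInv Ht))) v) (mv Mst v)
       = vadd (vsub (mv E (mv LamInv (mv Ht v))) (mv E v)) (mv Dst (mv LamInv z)).
    rewrite /Mst /E /z (mv_madd (msub (@idm n) D)) (mv_madd (msub (@idm n) Dst)) !mv_msub !mv_mm !mv_idm !mv_sub.
    apply: functional_extensionality => i; rewrite /vadd /vsub; ring.
  rewrite Eq.
  have V0 := vnorm_ge0 v.
  have Hz : vnorm z <= (lm * gc / 2 + lm * gc / 4) * vnorm v.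
    have Ez : z = vsub (mv (msub Hxm Hs) v) (mv (msub Hxm Ht) v).
      rewrite /z !mv_msub; apply: functional_extensionality => i; rewrite /vsub; ring.
    rewrite Ez. apply: Rle_trans (vnorm_sub_triang _ _) _.
    have := HHs v; have := HHx v. nra.
  have HHtv : vnorm (mv Ht v) <= (lm * gc + hs) * vnorm v.
    have := vnorm_rev (mv Ht v) (mv Hs v). rewrite -/z.
    have := mbound_frob Hs v. rewrite -/hs.
    have : 0 <= lm * gc * vnorm v by apply: Rmult_le_pos => //; nra.
    nra.
  have N1 := HE v.
  have N2 : vnorm (mv E (mv LamInv (mv Ht v))) <= INR n * e * (bI * ((lm * gc + hs) * vnorm v)).
    apply: Rle_trans (HE _) _. apply: Rmult_le_compat_l; first nra.
    apply: Rle_trans (mbound_frob _ _) _. rewrite -/bI. apply: Rmult_le_compat_l => //.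
  have N3 : lm * vnorm (mv Dst (mv LamInv z)) <= vnorm z by have := JBst (mv LamInv z); rewrite HLL.
  have N3' : vnorm (mv Dst (mv LamInv z)) <= 3 / 4 * gc * vnorm v.
    apply: (Rmult_le_reg_l lm) => //. nra.
  apply: Rle_trans (vnorm_triang _ _) _.
  have N12 : vnorm (vsub (mv E (mv LamInv (mv Ht v))) (mv E v)) <= INR n * e * K1 * vnorm v.
    apply: Rle_trans (vnorm_sub_triang _ _) _. rewrite /K1. nra.
  have : INR n * e * K1 * vnorm v <= gc / 4 * vnorm v by apply: Rmult_le_compat_r.
  lra.
set c := (1 - bc) / C.
have Hc : 0 < c by rewrite /c; apply: Rdiv_lt_0_compat; lra.
have Hlow : forall v, c * vnorm v <= vnorm (mv (madd (msub (@idm n) D) (mm D (mm LamInv Ht))) v).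
  move=> v; have H1 := HlowSt v; have H2 := Hpert v.
  have H3 := vnorm_rev (mv Mst v) (mv (madd (msub (@idm n) D) (mm D (mm LamInv Ht))) v).
  rewrite (vnorm_subC (mv Mst v)) in H3.
  have V0 := vnorm_ge0 v.
  have Hgc' : gc * C < bc by have := Hgc; move=> [_ h]; apply: (Rmult_lt_reg_r (/ C)); [apply: Rinv_0_lt_compat; lra | rewrite Rmult_assoc Rinv_r; [lra | lra]].
  apply: (Rmult_le_reg_l C) => //.
  have -> : C * (c * vnorm v) = (1 - bc) * vnorm v by rewrite /c; field; lra.
  nra.
have [N [HN HNb]] := inv_from_lower Hc Hlow.
exists N; split => //.
apply: mbound_spec.
- apply: Rlt_le; apply: Rdiv_lt_0_compat; lra.
- have -> : C / (1 - bc) = / c by rewrite /c; field; lra.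
  exact: HNb.
Qed.
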